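(* Let $\beta_0>0$, $M>0$, and let $(f_n)_{n\ge0}$ be a pointwise converging sequence of increasing differentiable functions $f_n:[0,\beta_0]\to[0,M]$ such that for all $n\ge1$, $$f_n'\ \ge\ \frac{n}{\Sigma_n}\,f_n,\qquad\text{where } \Sigma_n=\sum_{k=0}^{n-1}f_k .$$ Then there exists $\beta_1\in[0,\beta_0]$ such that: (P1) for every $\beta<\beta_1$ there exists $c_\beta>0$ such that $f_n(\beta)\le\exp(-c_\beta n)$ for all $n$ large enough; (P2) for every $\beta>\beta_1$ (with $\beta\le\beta_0$), the limit $f=\lim_{n\to\infty}f_n$ satisfies $f(\beta)\ge\beta-\beta_1$.
   Context: The differential inequality is assumed to hold pointwise on $[0,\beta_0]$ (in particular $\Sigma_n>0$ wherever it is used). *)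

(* Defs.v *)
From Stdlib Require Import Reals Lra Lia.
Open Scope R_scope.

(* g' is the derivative of g on the closed interval [a,b], in the sense of
   the derivative of the restriction of g to [a,b] (one-sided at endpoints). *)
Definition has_deriv_on (a b : R) (g g' : R -> R) : Prop :=
  forall x, a <= x <= b ->
  forall eps, 0 < eps -> exists delta, 0 < delta /\
    forall y, a <= y <= b -> y <> x -> Rabs (y - x) < delta ->
      Rabs ((g y - g x) / (y - x) - g' x) < eps.

Fixpoint Sigma (f : nat -> R -> R) (n : nat) (x : R) : R :=
  match n with
  | O => 0
  | S m => Sigma f m x + f m x
  end.

(* Main.v *)
Require Import Defs.
From Stdlib Require Import Reals Lra Lia Classical.
From Coquelicot Require Import Coquelicot.
Open Scope R_scope.

Definition CWin (a b : R) (h : R -> R) (x : R) : Prop :=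
  forall eps, 0 < eps -> exists delta, 0 < delta /\
    forall y, a <= y <= b -> Rabs (y - x) < delta -> Rabs (h y - h x) < eps.

Definition Ceps (h : R -> R) (x : R) : Prop :=
  forall eps, 0 < eps -> exists delta, 0 < delta /\
    forall y, Rabs (y - x) < delta -> Rabs (h y - h x) < eps.

Lemma hd_cont a b g g' x : has_deriv_on a b g g' -> a <= x <= b -> CWin a b g x.
Proof.
  intros H Hx eps Heps.
  destruct (H x Hx 1 Rlt_0_1) as [d [Hd Hq]].
  set (K := Rabs (g' x) + 1).
  assert (HK : 0 < K) by (unfold K; pose proof (Rabs_pos (g' x)); lra).
  exists (Rmin d (eps / K)); split.
  { apply Rmin_glb_lt; [lra| apply Rdiv_lt_0_compat; lra]. }
  intros y Hy Hyx.
  destruct (Req_dec y x) as [->|Hne].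
  { rewrite Rminus_eq_0, Rabs_R0; lra. }
  assert (H1 := Hq y Hy Hne (Rlt_le_trans _ _ _ Hyx (Rmin_l _ _))).
  assert (H2 : Rabs (y - x) < eps / K) by (eapply Rlt_le_trans; [apply Hyx| apply Rmin_r]).
  set (q := (g y - g x) / (y - x)) in *.
  assert (Hyx0 : y - x <> 0) by lra.
  assert (Hg : g y - g x = q * (y - x)) by (unfold q; field; auto).
  rewrite Hg, Rabs_mult.
  assert (Hq2 : Rabs q <= K).
  { unfold K. replace q with ((q - g' x) + g' x) by ring.
    pose proof (Rabs_triang (q - g' x) (g' x)); lra. }
  assert (Hp : 0 < Rabs (y - x)) by (apply Rabs_pos_lt; auto).
  apply Rle_lt_trans with (K * Rabs (y - x)).
  { apply Rmult_le_compat_r; lra. }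
  apply Rlt_le_trans with (K * (eps / K)).
  { apply Rmult_lt_compat_l; lra. }
  right; field; lra.
Qed.

Lemma cont_eps h x : continuity_pt h x -> Ceps h x.
Proof.
  intros H eps Heps.
  destruct (H eps Heps) as [alp [Ha Hb]].
  exists alp; split; auto.
  intros y Hy.
  destruct (Req_dec y x) as [->|Hne].
  { rewrite Rminus_eq_0, Rabs_R0; lra. }
  apply Hb. split. split; [constructor| auto]. simpl. unfold R_dist. auto.
Qed.

Lemma derive_cont h x d : is_derive h x d -> continuity_pt h x.
Proof.
  intros H. apply continuity_pt_filterlim.
  apply (ex_derive_continuous (V := R_NormedModule)). exists d. exact H.
Qed.

Lemma cw_comb a b g E L x : CWin a b g x -> Ceps E x -> Ceps L x ->
  CWin a b (fun y => g y * E y + L y) x.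
Proof.
  intros Hg HE HL eps Heps.
  set (A := Rabs (E x) + 1). set (B := Rabs (g x) + 1).
  assert (HA : 0 < A) by (unfold A; pose proof (Rabs_pos (E x)); lra).
  assert (HB : 0 < B) by (unfold B; pose proof (Rabs_pos (g x)); lra).
  destruct (Hg (eps / 3 / A)) as [d1 [Hd1 H1]]. { apply Rdiv_lt_0_compat; lra. }
  destruct (HE (Rmin 1 (eps / 3 / B))) as [d2 [Hd2 H2]].
  { apply Rmin_glb_lt; [lra| apply Rdiv_lt_0_compat; lra]. }
  destruct (HL (eps / 3)) as [d3 [Hd3 H3]]. { lra. }
  exists (Rmin d1 (Rmin d2 d3)); split.
  { repeat apply Rmin_glb_lt; lra. }
  intros y Hy Hyx.
  assert (Y1 : Rabs (y - x) < d1) by (eapply Rlt_le_trans; [apply Hyx| apply Rmin_l]).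
  assert (Y2 : Rabs (y - x) < d2).
  { eapply Rlt_le_trans; [apply Hyx|]. eapply Rle_trans; [apply Rmin_r| apply Rmin_l]. }
  assert (Y3 : Rabs (y - x) < d3).
  { eapply Rlt_le_trans; [apply Hyx|]. eapply Rle_trans; [apply Rmin_r| apply Rmin_r]. }
  specialize (H1 y Hy Y1). specialize (H2 y Y2). specialize (H3 y Y3).
  assert (H2a : Rabs (E y - E x) < 1) by (eapply Rlt_le_trans; [apply H2| apply Rmin_l]).
  assert (H2b : Rabs (E y - E x) < eps / 3 / B) by (eapply Rlt_le_trans; [apply H2| apply Rmin_r]).
  assert (HEy : Rabs (E y) <= A).
  { unfold A. replace (E y) with ((E y - E x) + E x) by ring.
    pose proof (Rabs_triang (E y - E x) (E x)); lra. }
  replace (g y * E y + L y - (g x * E x + L x)) with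
    ((g y - g x) * E y + (g x * (E y - E x) + (L y - L x))) by ring.
  eapply Rle_lt_trans; [apply Rabs_triang|].
  eapply Rle_lt_trans; [apply Rplus_le_compat_l; apply Rabs_triang|].
  rewrite !Rabs_mult.
  assert (T1 : Rabs (g y - g x) * Rabs (E y) <= eps / 3).
  { apply Rle_trans with (eps / 3 / A * A).
    - apply Rmult_le_compat; try apply Rabs_pos; lra.
    - right; field; lra. }
  assert (T2 : Rabs (g x) * Rabs (E y - E x) <= eps / 3).
  { apply Rle_trans with (B * (eps / 3 / B)).
    - apply Rmult_le_compat; try apply Rabs_pos; unfold B in *; lra.
    - right; field; lra. }
  lra.
Qed.

Lemma mono a b h dh : a < b -> CWin a b h a -> CWin a b h b ->
  (forall x, a < x < b -> is_derive h x (dh x) /\ 0 <= dh x) -> h a <= h b.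
Proof.
  intros Hab Ca Cb Hd.
  destruct (Rle_or_lt (h a) (h b)) as [|Hlt]; auto. exfalso.
  set (D := h a - h b).
  destruct (Ca (D/2)) as [da [Hda Ha]]. { unfold D; lra. }
  destruct (Cb (D/2)) as [db [Hdb Hb]]. { unfold D; lra. }
  set (eta := Rmin (Rmin da db) ((b - a) / 2) / 2).
  assert (He0 : 0 < eta).
  { unfold eta. apply Rdiv_lt_0_compat; [|lra]. repeat apply Rmin_glb_lt; lra. }
  assert (He1 : eta < da).
  { unfold eta. pose proof (Rmin_l (Rmin da db) ((b - a) / 2)).
    pose proof (Rmin_l da db). lra. }
  assert (He2 : eta < db).
  { unfold eta. pose proof (Rmin_l (Rmin da db) ((b - a) / 2)).
    pose proof (Rmin_r da db). lra. }
  assert (He3 : eta <= (b - a) / 4).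
  { unfold eta. pose proof (Rmin_r (Rmin da db) ((b - a) / 2)). lra. }
  destruct (MVT_gen h (a + eta) (b - eta) dh) as [c [Hc Heq]].
  { rewrite Rmin_left, Rmax_right by lra. intros x Hx. apply Hd; lra. }
  { rewrite Rmin_left, Rmax_right by lra. intros x Hx.
    apply (derive_cont h x (dh x)). apply Hd; lra. }
  rewrite Rmin_left, Rmax_right in Hc by lra.
  assert (Hdc : 0 <= dh c) by (apply Hd; lra).
  assert (Hge : 0 <= dh c * (b - eta - (a + eta))) by (apply Rmult_le_pos; lra).
  assert (A1 := Ha (a + eta) ltac:(lra) ltac:(rewrite Rabs_right; lra)).
  assert (A2 := Hb (b - eta) ltac:(lra) ltac:(rewrite Rabs_left; lra)).
  apply Rabs_def2 in A1. apply Rabs_def2 in A2. unfold D in *. lra.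
Qed.

Lemma hd_interior a b g g' x : has_deriv_on a b g g' -> a < x < b -> is_derive g x (g' x).
Proof.
  intros H Hx. apply is_derive_Reals. intros eps Heps.
  destruct (H x ltac:(lra) eps Heps) as [d [Hd Hq]].
  assert (Hp : 0 < Rmin d (Rmin (x - a) (b - x))) by (repeat apply Rmin_glb_lt; lra).
  exists (mkposreal _ Hp). simpl. intros h Hh0 Hh.
  pose proof (Rmin_l d (Rmin (x - a) (b - x))).
  pose proof (Rmin_r d (Rmin (x - a) (b - x))).
  pose proof (Rmin_l (x - a) (b - x)). pose proof (Rmin_r (x - a) (b - x)).
  apply Rabs_def2 in Hh as Hh'.
  specialize (Hq (x + h) ltac:(lra) ltac:(lra)).
  replace (x + h - x) with h in Hq by ring. apply Hq. lra.
Qed.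

Lemma hd_plus a b g g' h h' : has_deriv_on a b g g' -> has_deriv_on a b h h' ->
  has_deriv_on a b (fun y => g y + h y) (fun y => g' y + h' y).
Proof.
  intros Hg Hh x Hx eps Heps.
  destruct (Hg x Hx (eps/2) ltac:(lra)) as [d1 [Hd1 H1]].
  destruct (Hh x Hx (eps/2) ltac:(lra)) as [d2 [Hd2 H2]].
  exists (Rmin d1 d2); split. { apply Rmin_glb_lt; lra. }
  intros y Hy Hne Hyx.
  pose proof (Rmin_l d1 d2). pose proof (Rmin_r d1 d2).
  specialize (H1 y Hy Hne ltac:(lra)). specialize (H2 y Hy Hne ltac:(lra)).
  assert (Hyx0 : y - x <> 0) by lra.
  replace ((g y + h y - (g x + h x)) / (y - x) - (g' x + h' x)) with
    (((g y - g x) / (y - x) - g' x) + ((h y - h x) / (y - x) - h' x)) by (field; auto).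
  eapply Rle_lt_trans; [apply Rabs_triang| lra].
Qed.

Lemma hd_scal a b g g' k : has_deriv_on a b g g' ->
  has_deriv_on a b (fun y => k * g y) (fun y => k * g' y).
Proof.
  intros Hg x Hx eps Heps.
  assert (HK : 0 < Rabs k + 1) by (pose proof (Rabs_pos k); lra).
  destruct (Hg x Hx (eps / (Rabs k + 1))) as [d [Hd H1]]. { apply Rdiv_lt_0_compat; lra. }
  exists d; split; auto.
  intros y Hy Hne Hyx. specialize (H1 y Hy Hne Hyx).
  assert (Hyx0 : y - x <> 0) by lra.
  replace ((k * g y - k * g x) / (y - x) - k * g' x) with
    (k * ((g y - g x) / (y - x) - g' x)) by (field; auto).
  rewrite Rabs_mult.
  apply Rle_lt_trans with ((Rabs k + 1) * Rabs ((g y - g x) / (y - x) - g' x)).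
  - apply Rmult_le_compat_r; [apply Rabs_pos| lra].
  - apply Rlt_le_trans with ((Rabs k + 1) * (eps / (Rabs k + 1))).
    + apply Rmult_lt_compat_l; lra.
    + right; field; lra.
Qed.

Lemma hd_zero a b : has_deriv_on a b (fun _ => 0) (fun _ => 0).
Proof.
  intros x Hx eps Heps. exists 1; split; [lra|]. intros.
  replace ((0 - 0) / (y - x) - 0) with 0 by (field; lra). rewrite Rabs_R0; lra.
Qed.

Lemma cw_sub lo hi a b g x : lo <= a -> b <= hi -> CWin lo hi g x -> CWin a b g x.
Proof.
  intros H1 H2 H eps Heps. destruct (H eps Heps) as [d [Hd Hq]].
  exists d; split; auto. intros y Hy. apply Hq; lra.
Qed.

Lemma ceps_const c x : Ceps (fun _ => c) x.
Proof. intros eps Heps. exists 1; split; [lra|]. intros. rewrite Rminus_eq_0, Rabs_R0; lra. Qed.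

Lemma lemA lo hi a b g g' c : has_deriv_on lo hi g g' -> lo <= a <= b -> b <= hi ->
  (forall x, a <= x <= b -> c * g x <= g' x) -> g a * exp (c * (b - a)) <= g b.
Proof.
  intros Hg Hab Hb Hd.
  destruct (Req_dec a b) as [<-|Hne].
  { rewrite Rminus_eq_0, Rmult_0_r, exp_0; lra. }
  assert (Hm : g a * exp (- c * a) + 0 <= g b * exp (- c * b) + 0).
  { apply (mono a b (fun y => g y * exp (- c * y) + 0)
      (fun y => (g' y - c * g y) * exp (- c * y))); [lra| | |].
    - apply cw_comb.
      + apply (cw_sub lo hi); try lra. apply (hd_cont lo hi g g'); auto; lra.
      + apply cont_eps. apply (derive_cont _ _ (- c * exp (- c * a))).
        auto_derive; auto; ring.
      + apply ceps_const.
    - apply cw_comb.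
      + apply (cw_sub lo hi); try lra. apply (hd_cont lo hi g g'); auto; lra.
      + apply cont_eps. apply (derive_cont _ _ (- c * exp (- c * b))).
        auto_derive; auto; ring.
      + apply ceps_const.
    - intros x Hx. split.
      + replace ((g' x - c * g x) * exp (- c * x)) with
          (plus (plus (mult (g' x) (exp (- c * x))) (mult (g x) (- c * exp (- c * x)))) 0).
        2:{ unfold plus, mult; simpl. ring. }
        apply (is_derive_plus (fun y => g y * exp (- c * y)) (fun _ => 0)).
        * apply (is_derive_mult g (fun y => exp (- c * y))).
          -- apply (hd_interior lo hi); auto; lra.
          -- auto_derive; auto; ring.
          -- intros; apply Rmult_comm.
        * (auto_derive; try auto; try ring).
      + apply Rmult_le_pos; [| left; apply exp_pos]. specialize (Hd x ltac:(lra)). lra. }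
  rewrite !Rplus_0_r in Hm.
  apply Rmult_le_compat_r with (r := exp (c * b)) in Hm; [| left; apply exp_pos].
  rewrite !Rmult_assoc, <- !exp_plus in Hm.
  replace (- c * b + c * b) with 0 in Hm by ring. rewrite exp_0, Rmult_1_r in Hm.
  replace (c * (b - a)) with (- c * a + c * b) by ring. exact Hm.
Qed.

Lemma lemB lo hi a b g g' K : has_deriv_on lo hi g g' -> lo <= a <= b -> b <= hi ->
  (forall x, a <= x <= b -> K <= g' x) -> g a + K * (b - a) <= g b.
Proof.
  intros Hg Hab Hb Hd.
  destruct (Req_dec a b) as [<-|Hne].
  { rewrite Rminus_eq_0, Rmult_0_r; lra. }
  assert (Hm : g a * 1 + - K * a <= g b * 1 + - K * b).
  { apply (mono a b (fun y => g y * 1 + - K * y) (fun y => g' y - K)); [lra| | |].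
    - apply cw_comb.
      + apply (cw_sub lo hi); try lra. apply (hd_cont lo hi g g'); auto; lra.
      + apply ceps_const.
      + apply cont_eps. apply (derive_cont _ _ (- K)). auto_derive; auto; ring.
    - apply cw_comb.
      + apply (cw_sub lo hi); try lra. apply (hd_cont lo hi g g'); auto; lra.
      + apply ceps_const.
      + apply cont_eps. apply (derive_cont _ _ (- K)). auto_derive; auto; ring.
    - intros x Hx. split.
      + replace (g' x - K) with (plus (plus (mult (g' x) 1) (mult (g x) 0)) (- K)).
        2:{ unfold plus, mult; simpl. ring. }
        apply (is_derive_plus (fun y => g y * 1) (fun y => - K * y)).
        * apply (is_derive_mult g (fun y => 1)).
          -- apply (hd_interior lo hi); auto; lra.
          -- (auto_derive; try auto; try ring).
          -- intros; apply Rmult_comm.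
        * auto_derive; auto; ring.
      + specialize (Hd x ltac:(lra)). lra. }
  lra.
Qed.

Lemma exp_le x y : x <= y -> exp x <= exp y.
Proof. intros H; destruct H as [H|H]; [left; apply exp_increasing; auto| rewrite H; lra]. Qed.

Lemma ln_sub_le x y : 0 < x -> 0 < y -> ln y - ln x <= (y - x) / x.
Proof.
  intros Hx Hy. pose proof (exp_ineq1_le (ln y - ln x)) as H.
  unfold Rminus at 2 in H. rewrite exp_plus, exp_Ropp, !exp_ln in H by auto.
  replace ((y - x) / x) with (y * / x - 1) by (field; lra). lra.
Qed.

Lemma exp_sq y : 0 <= y -> (y / 2) * (y / 2) <= exp y.
Proof.
  intros Hy. assert (E : exp y = exp (y/2) * exp (y/2)) by (rewrite <- exp_plus; f_equal; field).
  rewrite E.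
  pose proof (exp_ineq1_le (y/2)).
  apply Rmult_le_compat; lra.
Qed.

Section Sig.
Lemma Sig_nonneg (beta0 M : R) (f : nat -> R -> R) n x :
  (forall n x, 0 <= x <= beta0 -> 0 <= f n x <= M) -> 0 <= x <= beta0 -> 0 <= Sigma f n x.
Proof.
  intros Hb Hx. induction n; simpl; [lra|]. pose proof (Hb n x Hx). lra.
Qed.

Lemma Sig_le (beta0 M : R) (f : nat -> R -> R) n x :
  (forall n x, 0 <= x <= beta0 -> 0 <= f n x <= M) -> 0 <= x <= beta0 -> Sigma f n x <= INR n * M.
Proof.
  intros Hb Hx. induction n; simpl; [lra|]. pose proof (Hb n x Hx). try rewrite S_INR. destruct n; simpl in *; lra.
Qed.

Lemma Sig_mono_x (beta0 : R) (f : nat -> R -> R) n x y :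
  (forall n x y, 0 <= x -> x <= y -> y <= beta0 -> f n x <= f n y) ->
  0 <= x -> x <= y -> y <= beta0 -> Sigma f n x <= Sigma f n y.
Proof.
  intros Hi H1 H2 H3. induction n; simpl; [lra|]. pose proof (Hi n x y H1 H2 H3). lra.
Qed.

Lemma Sig_mono_n (beta0 M : R) (f : nat -> R -> R) n m x :
  (forall n x, 0 <= x <= beta0 -> 0 <= f n x <= M) -> 0 <= x <= beta0 ->
  (n <= m)%nat -> Sigma f n x <= Sigma f m x.
Proof.
  intros Hb Hx Hnm. induction Hnm; [lra|]. simpl. pose proof (Hb m x Hx). lra.
Qed.
End Sig.

Lemma p1b (beta0 M : R) (f f' : nat -> R -> R) beta b C :
  0 < M ->
  (forall n x y, 0 <= x -> x <= y -> y <= beta0 -> f n x <= f n y) ->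
  (forall n, has_deriv_on 0 beta0 (f n) (f' n)) ->
  (forall n x, 0 <= x <= beta0 -> 0 <= f n x <= M) ->
  (forall n x, (1 <= n)%nat -> 0 <= x <= beta0 ->
     0 < Sigma f n x /\ f' n x >= INR n / Sigma f n x * f n x) ->
  0 <= beta < b -> b <= beta0 -> 0 < C ->
  (forall n, (1 <= n)%nat -> Sigma f n b <= C) ->
  exists c, 0 < c /\ exists N : nat, forall n : nat, (N <= n)%nat ->
         f n beta <= exp (- (c * INR n)).
Proof.
  intros HM Hi Hd Hb Hdi Hbe Hb0 HC HS.
  set (c := (b - beta) / (2 * C)).
  assert (Hc : 0 < c) by (unfold c; apply Rdiv_lt_0_compat; lra).
  exists c; split; auto.
  destruct (INR_archimed c M Hc) as [N HN].
  exists (Nat.max N 1). intros n Hn.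
  assert (Hn1 : (1 <= n)%nat) by lia.
  assert (HnN : INR N <= INR n) by (apply le_INR; lia).
  assert (HA := lemA 0 beta0 beta b (f n) (f' n) (INR n / C) (Hd n) ltac:(lra) Hb0).
  assert (Hm : f n beta * exp (INR n / C * (b - beta)) <= f n b).
  { apply HA. intros x Hx.
    destruct (Hdi n x Hn1 ltac:(lra)) as [Hs Hf].
    pose proof (Sig_mono_x beta0 f n x b Hi ltac:(lra) ltac:(lra) Hb0).
    pose proof (HS n Hn1). pose proof (Hb n x ltac:(lra)).
    apply Rle_trans with (INR n / Sigma f n x * f n x); [|lra].
    apply Rmult_le_compat_r; [lra|]. unfold Rdiv. apply Rmult_le_compat_l; [apply pos_INR|].
    apply Rinv_le_contravar; lra. }
  pose proof (Hb n b ltac:(lra)).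
  replace (INR n / C * (b - beta)) with (c * INR n + c * INR n) in Hm
    by (unfold c; field; lra).
  rewrite exp_plus in Hm.
  set (E := exp (c * INR n)) in *.
  assert (HE : M < E).
  { unfold E. pose proof (exp_ineq1_le (c * INR n)).
    assert (c * INR N <= c * INR n) by (apply Rmult_le_compat_l; lra). lra. }
  rewrite exp_Ropp. fold E.
  pose proof (Hb n beta ltac:(lra)).
  assert (HE0 : 0 < E) by lra.
  assert (f n beta * E < 1).
  { apply Rmult_lt_reg_r with E; auto. nra. }
  apply Rmult_le_reg_r with E; auto. rewrite Rinv_l by lra. lra.
Qed.

Lemma bfg (beta0 M : R) (f f' : nat -> R -> R) x b gam N :
  0 < M ->
  (forall n x y, 0 <= x -> x <= y -> y <= beta0 -> f n x <= f n y) ->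
  (forall n, has_deriv_on 0 beta0 (f n) (f' n)) ->
  (forall n x, 0 <= x <= beta0 -> 0 <= f n x <= M) ->
  (forall n x, (1 <= n)%nat -> 0 <= x <= beta0 ->
     0 < Sigma f n x /\ f' n x >= INR n / Sigma f n x * f n x) ->
  0 <= x < b -> b <= beta0 -> gam < 1 ->
  (forall n, (N <= n)%nat -> ln (Sigma f n b) <= gam * ln (INR n)) ->
  exists C, 0 < C /\ forall n, Sigma f n x <= C.
Proof.
  intros HM Hi Hd Hb Hdi Hx Hb0 Hg HS.
  set (eps := 1 - gam). set (d := b - x).
  assert (He : 0 < eps) by (unfold eps; lra).
  assert (Hdd : 0 < d) by (unfold d; lra).
  set (L0 := 8 / (d * eps * eps)).
  assert (HL0 : d * eps * eps * L0 = 8) by (unfold L0; field; split; lra).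
  assert (HL0p : 0 < L0) by (unfold L0; apply Rdiv_lt_0_compat; [lra|]; repeat apply Rmult_lt_0_compat; lra).
  destruct (INR_archimed 1 (exp L0) Rlt_0_1) as [N2 HN2]. rewrite Rmult_1_r in HN2.
  set (K := Nat.max N2 (Nat.max N 1)).
  assert (fb : forall n, (K <= n)%nat -> f n x * (INR n * INR n) <= M).
  { intros n Hn.
    assert (Hn1 : (1 <= n)%nat) by (unfold K in Hn; lia).
    assert (HnN : (N <= n)%nat) by (unfold K in Hn; lia).
    assert (HnN2 : INR N2 <= INR n) by (apply le_INR; unfold K in Hn; lia).
    destruct (Hdi n b Hn1 ltac:(lra)) as [HSb _].
    set (Sb := Sigma f n b) in *.
    set (cn := INR n / Sb).
    assert (Hm : f n x * exp (cn * (b - x)) <= f n b).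
    { apply (lemA 0 beta0 x b (f n) (f' n) cn (Hd n) ltac:(lra) Hb0).
      intros y Hy.
      destruct (Hdi n y Hn1 ltac:(lra)) as [Hs Hf].
      pose proof (Sig_mono_x beta0 f n y b Hi ltac:(lra) ltac:(lra) Hb0).
      pose proof (Hb n y ltac:(lra)).
      apply Rle_trans with (INR n / Sigma f n y * f n y); [|lra].
      apply Rmult_le_compat_r; [lra|]. unfold cn, Rdiv. apply Rmult_le_compat_l; [apply pos_INR|].
      apply Rinv_le_contravar; unfold Sb in *; lra. }
    pose proof (Hb n b ltac:(lra)). pose proof (Hb n x ltac:(lra)).
    assert (Hnp : 0 < INR n) by (apply lt_0_INR; lia).
    set (L := ln (INR n)).
    assert (HL : L0 < L).
    { unfold L. rewrite <- (ln_exp L0). apply ln_increasing; [apply exp_pos| lra]. }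
    assert (Hlc : eps * L <= ln cn).
    { unfold cn, Rdiv. rewrite ln_mult, ln_Rinv by (try apply Rinv_0_lt_compat; lra).
      pose proof (HS n HnN). fold Sb in H1. fold L. fold L in H1. unfold eps. lra. }
    assert (Hcn : 0 < cn) by (unfold cn; apply Rdiv_lt_0_compat; lra).
    assert (Hc1 : (eps * L / 2) * (eps * L / 2) <= cn).
    { rewrite <- (exp_ln cn) by auto. eapply Rle_trans; [apply exp_sq; nra| apply exp_le; auto]. }
    assert (Hc2 : 2 * L <= cn * d).
    { assert (d * eps * eps * L * L <= 4 * (cn * d)) by nra. nra. }
    assert (Hc3 : INR n * INR n <= exp (cn * (b - x))).
    { replace (INR n * INR n) with (exp (2 * L)).
      - apply exp_le. fold d. lra.
      - replace (2 * L) with (L + L) by ring. rewrite exp_plus. unfold L. rewrite exp_ln; auto. }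
    apply Rle_trans with (f n x * exp (cn * (b - x))); [|lra].
    apply Rmult_le_compat_l; lra. }
  assert (HK1 : (1 <= K)%nat) by (unfold K; lia).
  assert (HKp : 1 <= INR K) by (replace 1 with (INR 1) by reflexivity; apply le_INR; auto).
  assert (tail : forall k, Sigma f (K + k) x <= INR K * M + 2 * M * (/ INR K - / INR (K + k))).
  { induction k.
    - rewrite Nat.add_0_r, Rminus_eq_0. pose proof (Sig_le beta0 M f K x Hb ltac:(lra)). lra.
    - rewrite Nat.add_succ_r. simpl Sigma.
      set (m := INR (K + k)) in *.
      assert (Hm1 : 1 <= m) by (unfold m; replace 1 with (INR 1) by reflexivity; apply le_INR; lia).
      rewrite S_INR. fold m.
      pose proof (fb (K + k)%nat ltac:(lia)). fold m in H.
      pose proof (Hb (K + k)%nat x ltac:(lra)).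
      assert (f (K + k)%nat x <= 2 * M * (/ m - / (m + 1))).
      { replace (2 * M * (/ m - / (m + 1))) with (2 * M / (m * (m + 1))) by (field; lra).
        apply Rmult_le_reg_r with (m * (m + 1)); [nra|].
        unfold Rdiv. rewrite Rmult_assoc, Rinv_l by nra. nra. }
      lra. }
  exists (INR K * M + 2 * M + 1). split. { nra. }
  intros n. destruct (Nat.le_gt_cases K n) as [Hle|Hlt].
  - replace n with (K + (n - K))%nat by lia.
    pose proof (tail (n - K)%nat).
    assert (0 < INR (K + (n - K))) by (apply lt_0_INR; lia).
    assert (/ INR K <= 1) by (rewrite <- Rinv_1; apply Rinv_le_contravar; lra).
    pose proof (Rinv_0_lt_compat _ H0). nra.
  - pose proof (Sig_le beta0 M f n x Hb ltac:(lra)).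
    assert (INR n <= INR K) by (apply le_INR; lia). nra.
Qed.

Definition Sf (f : nat -> R -> R) (n : nat) (x : R) : R :=
  sum_f_R0 (fun k => / INR (S k) * f (S k) x) n.
Definition Hh (n : nat) : R := sum_f_R0 (fun k => / INR (S k)) n.

Lemma Sf_deriv beta0 (f f' : nat -> R -> R) n :
  (forall n, has_deriv_on 0 beta0 (f n) (f' n)) -> has_deriv_on 0 beta0 (Sf f n) (Sf f' n).
Proof.
  intros Hd. induction n.
  - change (has_deriv_on 0 beta0 (fun x => / INR 1 * f 1%nat x) (fun x => / INR 1 * f' 1%nat x)).
    apply hd_scal, Hd.
  - change (has_deriv_on 0 beta0 (fun x => Sf f n x + / INR (S (S n)) * f (S (S n)) x)
      (fun x => Sf f' n x + / INR (S (S n)) * f' (S (S n)) x)).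
    apply hd_plus; auto. apply hd_scal, Hd.
Qed.

Lemma Sf_nonneg beta0 M (f : nat -> R -> R) n x :
  (forall n x, 0 <= x <= beta0 -> 0 <= f n x <= M) -> 0 <= x <= beta0 -> 0 <= Sf f n x.
Proof.
  intros Hb Hx. induction n.
  - change (0 <= / INR 1 * f 1%nat x). pose proof (Hb 1%nat x Hx). simpl. lra.
  - change (0 <= Sf f n x + / INR (S (S n)) * f (S (S n)) x).
    pose proof (Hb (S (S n)) x Hx).
    assert (0 < / INR (S (S n))) by (apply Rinv_0_lt_compat, lt_0_INR; lia). nra.
Qed.

Lemma term_bound beta0 M (f f' : nat -> R -> R) m x :
  (forall n x, 0 <= x <= beta0 -> 0 <= f n x <= M) ->
  (forall n x, (1 <= n)%nat -> 0 <= x <= beta0 ->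
     0 < Sigma f n x /\ f' n x >= INR n / Sigma f n x * f n x) ->
  (1 <= m)%nat -> 0 <= x <= beta0 ->
  ln (Sigma f (S m) x) - ln (Sigma f m x) <= / INR m * f' m x.
Proof.
  intros Hb Hdi Hm Hx.
  destruct (Hdi m x Hm Hx) as [Hs Hf].
  destruct (Hdi (S m) x ltac:(lia) Hx) as [Hs' _].
  eapply Rle_trans; [apply ln_sub_le; auto|].
  change (Sigma f (S m) x) with (Sigma f m x + f m x).
  assert (Hmp : 0 < INR m) by (apply lt_0_INR; lia).
  replace ((Sigma f m x + f m x - Sigma f m x) / Sigma f m x) with (/ INR m * (INR m / Sigma f m x * f m x))
    by (field; lra).
  apply Rmult_le_compat_l; [left; apply Rinv_0_lt_compat; auto| lra].
Qed.

Lemma Sd_lower beta0 M (f f' : nat -> R -> R) n x :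
  (forall n x, 0 <= x <= beta0 -> 0 <= f n x <= M) ->
  (forall n x, (1 <= n)%nat -> 0 <= x <= beta0 ->
     0 < Sigma f n x /\ f' n x >= INR n / Sigma f n x * f n x) ->
  0 <= x <= beta0 ->
  ln (Sigma f (S (S n)) x) - ln (Sigma f 1 x) <= Sf f' n x.
Proof.
  intros Hb Hdi Hx. induction n.
  - change (Sf f' 0 x) with (/ INR 1 * f' 1%nat x).
    apply (term_bound beta0 M); auto.
  - change (Sf f' (S n) x) with (Sf f' n x + / INR (S (S n)) * f' (S (S n)) x).
    pose proof (term_bound beta0 M f f' (S (S n)) x Hb Hdi ltac:(lia) Hx). lra.
Qed.

Lemma H_lower n : ln (INR (S (S n))) <= Hh n.
Proof.
  induction n.
  - change (Hh 0) with (/ INR 1). pose proof (ln_sub_le 1 (INR 2) Rlt_0_1 ltac:(simpl; lra)).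
    rewrite ln_1 in H. simpl in *. lra.
  - change (Hh (S n)) with (Hh n + / INR (S (S n))).
    assert (H0 : 0 < INR (S (S n))) by (apply lt_0_INR; lia).
    pose proof (ln_sub_le (INR (S (S n))) (INR (S (S (S n)))) H0 ltac:(apply lt_0_INR; lia)).
    rewrite (S_INR (S (S n))) in H at 2.
    replace ((INR (S (S n)) + 1 - INR (S (S n))) / INR (S (S n))) with (/ INR (S (S n))) in H
      by (field; lra). lra.
Qed.

Lemma H_upper n : Hh n <= 1 + ln (INR (S n)).
Proof.
  induction n.
  - change (Hh 0) with (/ INR 1). simpl. rewrite ln_1. lra.
  - change (Hh (S n)) with (Hh n + / INR (S (S n))).
    assert (H0 : 0 < INR (S (S n))) by (apply lt_0_INR; lia).
    pose proof (ln_sub_le (INR (S (S n))) (INR (S n)) H0 ltac:(apply lt_0_INR; lia)).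
    replace ((INR (S n) - INR (S (S n))) / INR (S (S n))) with (- / INR (S (S n))) in H.
    + lra.
    + rewrite (S_INR (S n)). pose proof (pos_INR (S n)). field. lra.
Qed.

Lemma H_pos n : 0 < Hh n.
Proof.
  induction n.
  - change (Hh 0) with (/ INR 1). simpl. lra.
  - change (Hh (S n)) with (Hh n + / INR (S (S n))).
    assert (0 < / INR (S (S n))) by (apply Rinv_0_lt_compat, lt_0_INR; lia). lra.
Qed.

Lemma p2 (beta0 M : R) (f f' : nat -> R -> R) b1 beta l gam :
  0 < M ->
  (forall n x y, 0 <= x -> x <= y -> y <= beta0 -> f n x <= f n y) ->
  (forall n, has_deriv_on 0 beta0 (f n) (f' n)) ->
  (forall n x, 0 <= x <= beta0 -> 0 <= f n x <= M) ->
  (forall n x, (1 <= n)%nat -> 0 <= x <= beta0 ->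
     0 < Sigma f n x /\ f' n x >= INR n / Sigma f n x * f n x) ->
  0 <= b1 < beta -> beta <= beta0 -> 0 < gam < 1 ->
  (forall g, g < 1 -> forall N, exists n, (N <= n)%nat /\ g * ln (INR n) < ln (Sigma f n b1)) ->
  Un_cv (fun n => f n beta) l -> gam * (beta - b1) <= l.
Proof.
  intros HM Hi Hd Hb Hdi Hb1 Hbe Hg Hbad Hl.
  set (d := beta - b1).
  assert (Hdp : 0 < d) by (unfold d; lra).
  assert (HT : Un_cv (fun n => Sf f n beta / Hh n) l).
  { unfold Sf, Hh.
    apply (Cesaro (fun k => / INR (S k)) (fun k => f (S k) beta)).
    - intros eps Heps. destruct (Hl eps Heps) as [N HN]. exists N. intros n Hn. apply HN. lia.
    - intros n. apply Rinv_0_lt_compat, lt_0_INR; lia.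
    - intros Mx. destruct (INR_archimed 1 (exp Mx) Rlt_0_1) as [N HN]. rewrite Rmult_1_r in HN.
      exists N. intros n Hn. fold (Hh n).
      eapply Rlt_le_trans; [| apply H_lower].
      rewrite <- (ln_exp Mx). apply ln_increasing; [apply exp_pos|].
      assert (INR N <= INR (S (S n))) by (apply le_INR; lia). lra. }
  destruct (Rle_or_lt (gam * d) l) as [|Hlt]; auto. exfalso.
  set (gp := (1 + gam) / 2).
  set (L1 := (gam + ln M) / (gp - gam)).
  assert (HL1 : (gp - gam) * L1 = gam + ln M) by (unfold L1, gp; field; lra).
  destruct (INR_archimed 1 (exp L1) Rlt_0_1) as [N3 HN3]. rewrite Rmult_1_r in HN3.
  destruct (HT (gam * d - l) ltac:(lra)) as [N0 HN0].
  destruct (Hbad gp ltac:(unfold gp; lra) (Nat.max (S N0) (Nat.max N3 1))) as [m [Hm Hlm]].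
  destruct m as [|n]; [lia|].
  set (L := ln (INR (S n))) in *.
  assert (HL : L1 < L).
  { unfold L. rewrite <- (ln_exp L1). apply ln_increasing; [apply exp_pos|].
    assert (INR N3 <= INR (S n)) by (apply le_INR; lia). lra. }
  destruct (Hdi (S n) b1 ltac:(lia) ltac:(lra)) as [HS1 _].
  set (K := ln (Sigma f (S n) b1) - ln M).
  assert (HB := lemB 0 beta0 b1 beta (Sf f n) (Sf f' n) K (Sf_deriv beta0 f f' n Hd)
                 ltac:(lra) Hbe).
  assert (HB' : Sf f n b1 + K * (beta - b1) <= Sf f n beta).
  { apply HB. intros x Hx.
    pose proof (Sd_lower beta0 M f f' n x Hb Hdi ltac:(lra)).
    pose proof (Sig_mono_x beta0 f (S n) b1 x Hi ltac:(lra) ltac:(lra) ltac:(lra)).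
    pose proof (Sig_mono_n beta0 M f (S n) (S (S n)) x Hb ltac:(lra) ltac:(lia)).
    assert (ln (Sigma f (S n) b1) <= ln (Sigma f (S (S n)) x)) by (apply ln_le; lra).
    destruct (Hdi 1%nat x ltac:(lia) ltac:(lra)) as [H1p _].
    assert (Sigma f 1 x <= M) by (simpl; pose proof (Hb 0%nat x ltac:(lra)); lra).
    assert (ln (Sigma f 1 x) <= ln M) by (apply ln_le; lra).
    unfold K. lra. }
  pose proof (Sf_nonneg beta0 M f n b1 Hb ltac:(lra)).
  fold d in HB'.
  assert (HK : gam * (1 + L) <= K).
  { assert ((gp - gam) * L1 <= (gp - gam) * L) by (apply Rmult_le_compat_l; unfold gp; lra).
    unfold K. unfold gp in *. lra. }
  pose proof (H_upper n) as HU. pose proof (H_pos n) as HP. fold L in HU.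
  assert (Hge : gam * d * Hh n <= Sf f n beta).
  { assert (gam * d * Hh n <= gam * (1 + L) * d).
    { replace (gam * (1 + L) * d) with (gam * d * (1 + L)) by ring.
      apply Rmult_le_compat_l; [nra| lra]. }
    assert (gam * (1 + L) * d <= K * d) by (apply Rmult_le_compat_r; lra).
    lra. }
  assert (Hq : gam * d <= Sf f n beta / Hh n).
  { apply Rmult_le_reg_r with (Hh n); auto. replace (Sf f n beta / Hh n * Hh n) with (Sf f n beta) by (field; lra). lra. }
  specialize (HN0 n ltac:(lia)). unfold R_dist in HN0. apply Rabs_def2 in HN0. lra.
Qed.

Theorem lemma3p1 (beta0 M : R) (f f' : nat -> R -> R) :
  0 < beta0 -> 0 < M ->
  (* pointwise convergence on [0, beta0] *)
  (forall x, 0 <= x <= beta0 -> exists l, Un_cv (fun n => f n x) l) ->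
  (* each f_n is increasing on [0, beta0] *)
  (forall n x y, 0 <= x -> x <= y -> y <= beta0 -> f n x <= f n y) ->
  (* each f_n is differentiable on [0, beta0] with derivative f' n *)
  (forall n, has_deriv_on 0 beta0 (f n) (f' n)) ->
  (* values in [0, M] *)
  (forall n x, 0 <= x <= beta0 -> 0 <= f n x <= M) ->
  (* differential inequality (with Sigma_n > 0 where used) *)
  (forall n x, (1 <= n)%nat -> 0 <= x <= beta0 ->
     0 < Sigma f n x /\ f' n x >= INR n / Sigma f n x * f n x) ->
  exists beta1, 0 <= beta1 <= beta0 /\
    (forall beta, 0 <= beta < beta1 ->
       exists c, 0 < c /\ exists N : nat, forall n : nat, (N <= n)%nat ->
         f n beta <= exp (- (c * INR n))) /\
    (forall beta, beta1 < beta <= beta0 ->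
       forall l, Un_cv (fun n => f n beta) l -> l >= beta - beta1).
Proof.
  intros Hb0 HM Hcv Hi Hd Hb Hdi.
  set (good := fun x => exists gam, gam < 1 /\ exists N : nat,
                 forall n, (N <= n)%nat -> ln (Sigma f n x) <= gam * ln (INR n)).
  set (E := fun x => 0 <= x <= beta0 /\ (x = 0 \/ good x)).
  assert (HE0 : E 0) by (split; [lra| left; auto]).
  destruct (completeness E) as [b1 [Hub Hlub]].
  { exists beta0. intros x [Hx _]. lra. }
  { exists 0; auto. }
  assert (Hb1a : 0 <= b1) by (apply Hub; auto).
  assert (Hb1b : b1 <= beta0) by (apply Hlub; intros x [Hx _]; lra).
  exists b1. split; [lra| split].
  - intros beta [Hbe Hbe1].
    destruct (classic (exists x, E x /\ beta < x)) as [[x [[Hx Hgx] Hbx]]|Hn].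
    + destruct Hgx as [Hx0|[gam [Hg [N HN]]]]; [lra|].
      destruct (bfg beta0 M f f' ((beta + x) / 2) x gam N HM Hi Hd Hb Hdi
                  ltac:(lra) ltac:(lra) Hg HN) as [C [HC HSC]].
      apply (p1b beta0 M f f' beta ((beta + x) / 2) C HM Hi Hd Hb Hdi ltac:(lra) ltac:(lra) HC).
      intros n _; apply HSC.
    + exfalso. assert (b1 <= beta); [|lra].
      apply Hlub. intros x Ex. apply Rnot_lt_le. intro. apply Hn. eauto.
  - intros beta [Hbe1 Hbe2] l Hl. apply Rle_ge.
    destruct (Rle_or_lt (beta - b1) l) as [|Hlt]; auto. exfalso.
    set (D := beta - b1). set (e := D - l).
    assert (HD : 0 < D) by (unfold D; lra).
    assert (He : 0 < e) by (unfold e, D; lra).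
    set (s := Rmin (1/2) (e / (4 * D))).
    set (t := Rmin (D / 2) (e / 4)).
    assert (Hs1 : s <= 1/2) by apply Rmin_l.
    assert (Hs2 : s <= e / (4 * D)) by apply Rmin_r.
    assert (Hs0 : 0 < s) by (apply Rmin_glb_lt; [lra| apply Rdiv_lt_0_compat; lra]).
    assert (Ht1 : t <= D / 2) by apply Rmin_l.
    assert (Ht2 : t <= e / 4) by apply Rmin_r.
    assert (Ht0 : 0 < t) by (apply Rmin_glb_lt; lra).
    assert (HsD : s * D <= e / 4).
    { apply Rle_trans with (e / (4 * D) * D); [apply Rmult_le_compat_r; lra| right; field; lra]. }
    assert (Hnot : ~ E (b1 + t)).
    { intro H. pose proof (Hub _ H). lra. }
    assert (Hbad : forall g, g < 1 -> forall N, exists n, (N <= n)%nat /\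
                     g * ln (INR n) < ln (Sigma f n (b1 + t))).
    { intros g Hg N. apply NNPP. intro Hno. apply Hnot. split; [unfold D in *; lra|].
      right. exists g. split; auto. exists N. intros n Hn.
      apply Rnot_lt_le. intro. apply Hno. eauto. }
    pose proof (p2 beta0 M f f' (b1 + t) beta l (1 - s) HM Hi Hd Hb Hdi
                  ltac:(unfold D in *; lra) Hbe2 ltac:(lra) Hbad Hl).
    assert (s * t >= 0) by nra.
    unfold e, D in *. nra.
Qed.
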